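(* Let $S$ be a finite semigroup, let $*:S\to S$ be an anti-involution of $S$, let $R$ be a commutative ring with $1$, and let $\alpha:S\times S\to R$ be a twisting. Assume: (A1) $\alpha(x,y)=\alpha(y^*,x^* )$ for all $x,y\in S$. (A2) For each $\mathcal D$-class $D$ of $S$ there is an idempotent $1_D\in D$ with $1_D^*=1_D$. Let $L_D$ be the $\mathcal L$-class of $1_D$, let $L_D^*=\{x^*\mid x\in L_D\}$ (this is the $\mathcal R$-class of $1_D$), and let $G_D=L_D\cap L_D^*$ (the $\mathcal H$-class of $1_D$, a group, mapped to itself by $*$). (A3) For each $\mathcal D$-class $D$ there is a map $\beta_D:L_D\times L_D^*\to G(R)$, where $G(R)$ is the group of units of $R$, such that $\beta_D(x,y)\beta_D(xy,z)=\beta_D(x,yz)\beta_D(y,z)$, $\alpha(x,y)\beta_D(xy,z)=\alpha(x,yz)\beta_D(y,z)$, and $\beta_D(x,y)=\beta_D(y^*,x^* )$, for all $x,y,z\in S$ for which every value of $\beta_D$ occurring in the respective identity has its arguments in $L_D\times L_D^*$. (A4) For each $\mathcal D$-class $D$, the twisted group algebra $R^{\beta_D}[G_D]$ (with twisting the restriction of $\beta_D$ to $G_D\times G_D$) is cellular with cell datum $(\Lambda_D,M_D,C,* )$, where $*$ here denotes the $R$-linear extension of $*|_{G_D}$ to $R^{\beta_D}[G_D]$. Write each cellular basis element of $R^{\beta_D}[G_D]$ as $C^\lambda_{st}=\sum_{g\in G_D}c^\lambda_{st}(g)\,g$ with $c^\lambda_{st}(g)\in R$. Let $\mathcal D$ denote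 the set of $\mathcal D$-classes of $S$ and, for $D\in\mathcal D$, let $\mathcal L_D$ be the set of $\mathcal L$-classes contained in $D$. Let $\Lambda=\{(D,\lambda)\mid D\in\mathcal D,\ \lambda\in\Lambda_D\}$, partially ordered by $(D_1,\lambda_1)\le(D_2,\lambda_2)$ iff $D_1<_{\mathcal D}D_2$, or $D_1=D_2$ and $\lambda_1\le\lambda_2$ in $\Lambda_{D_1}$. For $(D,\lambda)\in\Lambda$ let $M(D,\lambda)=\mathcal L_D\times M_D(\lambda)$. For each $L\in\mathcal L_D$ choose any $u_L\in L$ with $u_L\,\mathcal R\,1_D$, and for $(L,s),(K,t)\in M(D,\lambda)$ define \[C^{(D,\lambda)}_{(L,s)(K,t)}=\sum_{g\in G_D}c^\lambda_{st}(g)\,\beta_D(u_L^*,g)\,\beta_D(u_L^*g,u_K)\,(u_L^*gu_K)\in R^\alpha[S].\] Then $R^\alpha[S]$ is a cellular algebra with cell datum $(\Lambda,M,C,* )$, where $*$ is the $R$-linear extension of $*$ to $R^\alpha[S]$.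
   Context: Green's relations on a semigroup $S$ (with $S^1$ the monoid obtained by adjoining an identity): $x\le_{\mathcal R}y$ iff $x\in yS^1$; $x\le_{\mathcal L}y$ iff $x\in S^1y$; $x\le_{\mathcal J}y$ iff $x\in S^1yS^1$; $\mathcal R,\mathcal L,\mathcal J$ are the equivalences $\le\cap\ge$ of these preorders; $\mathcal H=\mathcal R\cap\mathcal L$; $\mathcal D$ is the equivalence relation generated by $\mathcal R\cup\mathcal L$. For finite $S$, $\mathcal D=\mathcal J$, so $\le_{\mathcal J}$ induces a partial order $\le_{\mathcal D}$ on the set of $\mathcal D$-classes; $D_1<_{\mathcal D}D_2$ means $D_1\le_{\mathcal D}D_2$ and $D_1\ne D_2$. An anti-involution of $S$ is a map $*:S\to S$ with $(x^* )^*=x$ and $(xy)^*=y^*x^*$. A twisting from $S$ into $R$ is a map $\alpha:S\times S\to R$ with $\alpha(x,y)\alpha(xy,z)=\alpha(x,yz)\alpha(y,z)$ for all $x,y,z$; the twisted semigroup algebra $R^\alpha[S]$ is the free $R$-module with basis $S$ and product $x\cdot y=\alpha(x,y)(xy)$ extended bilinearly (associative). By (A1), $*$ extends $R$-linearly to an anti-involution of $R^\alpha[S]$; similarly for $R^{\beta_D}[G_D]$. An anti-involution of an $R$-algebra $A$ is an $R$-linear map $*$ with $(a^* )^*=a$ and $(ab)^*=b^*a^*$. An $R$-algebra $A$ is cellular with cell datum $(\Lambda,M,C,* )$ if: (C1) $\Lambda$ is a finite poset, for each $\lambda\in\Lambda$ there is a finite set $M(\lambda)$ and elements $C^\lambda_{st}\in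 A$ ($s,t\in M(\lambda)$), and $\{C^\lambda_{st}\}$ is an $R$-basis of $A$; (C2) $*$ is an anti-involution of $A$ with $(C^\lambda_{st})^*=C^\lambda_{ts}$; (C3) for all $\lambda$, $s\in M(\lambda)$, $a\in A$ there exist $r_a(s',s)\in R$ ($s'\in M(\lambda)$) such that for every $t\in M(\lambda)$, $aC^\lambda_{st}\in\sum_{s'}r_a(s',s)C^\lambda_{s't}+A(<\lambda)$, where $A(<\lambda)$ is the $R$-span of all $C^\mu_{s''t''}$ with $\mu<\lambda$. *)

(* Defs.v *)
From HB Require Import structures.
From mathcomp Require Import all_boot all_order all_algebra.
Set Implicit Arguments. Unset Strict Implicit. Unset Printing Implicit Defensive.
Import Order.TTheory GRing.Theory.
Local Open Scope ring_scope.

Section Green.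
Variables (S : finType) (mul : S -> S -> S).

(* x <=_R y iff x \in y S^1 ; etc. *)
Definition leR (x y : S) : bool := (x == y) || [exists z, x == mul y z].
Definition leL (x y : S) : bool := (x == y) || [exists z, x == mul z y].
Definition leJ (x y : S) : bool :=
  [|| x == y, [exists z, x == mul y z], [exists z, x == mul z y]
    | [exists z, exists w, x == mul (mul z y) w]].
Definition Rrel (x y : S) : bool := leR x y && leR y x.
Definition Lrel (x y : S) : bool := leL x y && leL y x.
Definition Hrel (x y : S) : bool := Rrel x y && Lrel x y.
(* D = equivalence relation generated by R \cup L (reflexive-transitive closure
   of the symmetric relation R \cup L) *)
Definition Drel : rel S := connect (fun x y => Rrel x y || Lrel x y).

Definition Lclass (x : S) : {set S} := [set y | Lrel x y].
Definition Dclass (x : S) : {set S} := [set y | Drel x y].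
Definition Dclasses : {set {set S}} := [set Dclass x | x : S].
Definition LclassesIn (D : {set S}) : {set {set S}} := [set Lclass x | x in D].
Definition leDcl (D1 D2 : {set S}) : bool :=
  [exists x in D1, exists y in D2, leJ x y].
Definition ltDcl (D1 D2 : {set S}) : bool := leDcl D1 D2 && (D1 != D2).
End Green.

Definition anti_involution (S : Type) (mul : S -> S -> S) (star : S -> S) :=
  involutive star /\ forall x y, star (mul x y) = mul (star y) (star x).

Definition twisting (S : Type) (R : comPzRingType) (mul : S -> S -> S)
  (alpha : S -> S -> R) :=
  forall x y z, alpha x y * alpha (mul x y) z = alpha x (mul y z) * alpha y z.

Definition is_unit (R : comPzRingType) (r : R) := exists r' : R, r * r' = 1.

(** * Twisted semigroup algebras, realised on functions S -> R
    (the free R-module with basis S, since S is finite) *)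
Section Twisted.
Variables (S : finType) (R : comPzRingType).

Definition fscale (r : R) (a : {ffun S -> R}) : {ffun S -> R} :=
  [ffun z => r * a z].
Definition basis_el (x : S) : {ffun S -> R} := [ffun z => (z == x)%:R].
(* twisted product: x . y = alpha(x,y) (xy), extended bilinearly *)
Definition tmul (mul : S -> S -> S) (alpha : S -> S -> R)
  (a b : {ffun S -> R}) : {ffun S -> R} :=
  [ffun z => \sum_(x : S) \sum_(y : S | mul x y == z) a x * b y * alpha x y].
(* R-linear extension of star : \sum a_x x  |->  \sum a_x x^* *)
Definition fstar (star : S -> S) (a : {ffun S -> R}) : {ffun S -> R} :=
  [ffun z => a (star z)].
End Twisted.

(** * Cellular algebras (Graham--Lehrer), for an R-algebra whose elements
    are the functions a : S -> R satisfying inA (a sub-R-module),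
    with multiplication mulA and map starA.
    Lam is a finite type; the poset is the subset Ls of Lam ordered by le;
    M l (a finite subset of Mt) is M(lambda). *)
Section Cellular.
Variables (S : finType) (R : comPzRingType).
Variables (inA : {ffun S -> R} -> Prop)
  (mulA : {ffun S -> R} -> {ffun S -> R} -> {ffun S -> R})
  (starA : {ffun S -> R} -> {ffun S -> R}).
Variables (Lam : finType) (Ls : {set Lam}) (le : rel Lam)
  (Mt : finType) (M : Lam -> {set Mt}) (C : Lam -> Mt -> Mt -> {ffun S -> R}).

Definition comb (coef : Lam -> Mt -> Mt -> R) : {ffun S -> R} :=
  \sum_(l in Ls) \sum_(s in M l) \sum_(t in M l) fscale (coef l s t) (C l s t).

Definition in_lower (l : Lam) (a : {ffun S -> R}) : Prop :=
  exists d : Lam -> Mt -> Mt -> R,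
    a = \sum_(mu in Ls | le mu l && (mu != l))
          \sum_(s in M mu) \sum_(t in M mu) fscale (d mu s t) (C mu s t).

Definition cellular : Prop :=
  [/\ {in Ls, forall l, le l l},
      {in Ls &, forall l1 l2, le l1 l2 -> le l2 l1 -> l1 = l2}
    & {in Ls & &, forall l1 l2 l3, le l1 l2 -> le l2 l3 -> le l1 l3}] /\
  [/\ (forall l s t, l \in Ls -> s \in M l -> t \in M l -> inA (C l s t)),
      (forall coef, comb coef = 0 ->
         forall l s t, l \in Ls -> s \in M l -> t \in M l -> coef l s t = 0)
    & (forall a, inA a -> exists coef, a = comb coef)] /\
  [/\ (forall a, inA a -> inA (starA a)),
      (forall a, inA a -> starA (starA a) = a),
      (forall r a b, inA a -> inA b ->
          starA (fscale r a + b) = fscale r (starA a) + starA b),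
      (forall a b, inA a -> inA b -> starA (mulA a b) = mulA (starA b) (starA a))
    & (forall l s t, l \in Ls -> s \in M l -> t \in M l ->
          starA (C l s t) = C l t s)] /\
  (forall l s a, l \in Ls -> s \in M l -> inA a ->
     exists r : Mt -> R, forall t, t \in M l ->
       in_lower l (mulA a (C l s t) -
                   \sum_(s' in M l) fscale (r s') (C l s' t))).
End Cellular.

Section Theorem5Data.
Variables (S : finType) (mul : S -> S -> S) (star : S -> S) (one : {set S} -> S).

Definition LD (D : {set S}) : {set S} := Lclass mul (one D).
Definition LDs (D : {set S}) : {set S} := star @: LD D.
Definition GD (D : {set S}) : {set S} := LD D :&: LDs D.

Variables (R : comPzRingType) (beta : {set S} -> S -> S -> R).
Variables (Lam : finType) (LamD : {set S} -> {set Lam}) (leD : {set S} -> rel Lam)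
  (Mt : finType) (MD : {set S} -> Lam -> {set Mt})
  (CD : {set S} -> Lam -> Mt -> Mt -> {ffun S -> R}) (u : {set S} -> S).

Definition bigLam : {set {set S} * Lam} :=
  [set p | (p.1 \in Dclasses mul) && (p.2 \in LamD p.1)].
Definition bigLe : rel ({set S} * Lam) := fun p q =>
  ltDcl mul p.1 q.1 || ((p.1 == q.1) && leD p.1 p.2 q.2).
Definition bigM (p : {set S} * Lam) : {set {set S} * Mt} :=
  [set q | (q.1 \in LclassesIn mul p.1) && (q.2 \in MD p.1 p.2)].
Definition bigC (p : {set S} * Lam) (q1 q2 : {set S} * Mt) : {ffun S -> R} :=
  let D := p.1 in let l := p.2 in
  let L := q1.1 in let s := q1.2 in let K := q2.1 in let t := q2.2 in
  \sum_(g in GD D)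
     fscale (CD D l s t g * beta D (star (u L)) g
               * beta D (mul (star (u L)) g) (u K))
            (basis_el R (mul (mul (star (u L)) g) (u K))).
End Theorem5Data.

(* Main.v *)
Require Import Defs.
From HB Require Import structures.
From mathcomp Require Import all_boot all_order all_algebra.
From mathcomp Require Import ring.
From Stdlib Require Import ClassicalEpsilon.
Set Implicit Arguments. Unset Strict Implicit. Unset Printing Implicit Defensive.
Import GRing.Theory.
Local Open Scope ring_scope.
Section Green1.
Variables (S : finType) (mul : S -> S -> S) (mulA : associative mul).
Local Open Scope nat_scope.
Local Notation "x ⋅ y" := (mul x y) (at level 40, left associativity).

Definition rm (x : S) (o : option S) := if o is Some z then x ⋅ z else x.
Definition lm (o : option S) (x : S) := if o is Some z then z ⋅ x else x.
Definition om (a b : option S) : option S :=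
  match a, b with None, _ => b | _, None => a | Some x, Some y => Some (x ⋅ y) end.

Lemma rm_rm x a b : rm (rm x a) b = rm x (om a b).
Proof. by case: a; case: b => //= *; rewrite mulA. Qed.
Lemma lm_lm x a b : lm a (lm b x) = lm (om a b) x.
Proof. by case: a; case: b => //= *; rewrite mulA. Qed.
Lemma lm_rm x a b : lm a (rm x b) = rm (lm a x) b.
Proof. by case: a; case: b => //= *; rewrite mulA. Qed.
Lemma lm_mul a x y : lm a (x ⋅ y) = lm a x ⋅ y.
Proof. by case: a => //= *; rewrite mulA. Qed.
Lemma rm_mul a x y : rm (x ⋅ y) a = x ⋅ rm y a.
Proof. by case: a => //= *; rewrite mulA. Qed.

Lemma leRP x y : reflect (exists o, x = rm y o) (leR mul x y).
Proof.
apply: (iffP orP) => [[/eqP->|/existsP[z /eqP->]]|[[z|] ->]].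
- by exists None. - by exists (Some z). - by right; apply/existsP; exists z.
- by left.
Qed.
Lemma leLP x y : reflect (exists o, x = lm o y) (leL mul x y).
Proof.
apply: (iffP orP) => [[/eqP->|/existsP[z /eqP->]]|[[z|] ->]].
- by exists None. - by exists (Some z). - by right; apply/existsP; exists z.
- by left.
Qed.
Lemma leJP x y : reflect (exists o1 o2, x = rm (lm o1 y) o2) (leJ mul x y).
Proof.
apply: (iffP idP).
- case/or4P => [/eqP->|/existsP[z /eqP->]|/existsP[z /eqP->]|/existsP[z /existsP[w /eqP->]]].
  + by exists None, None.
  + by exists None, (Some z).
  + by exists (Some z), None.
  + by exists (Some z), (Some w).
- move=> [[a|] [[b|] ->]] /=; apply/or4P.
  + by constructor 4; apply/existsP; exists a; apply/existsP; exists b.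
  + by constructor 3; apply/existsP; exists a.
  + by constructor 2; apply/existsP; exists b.
  + by constructor 1.
Qed.

Lemma leR_refl x : leR mul x x. Proof. by apply/leRP; exists None. Qed.
Lemma leL_refl x : leL mul x x. Proof. by apply/leLP; exists None. Qed.
Lemma leJ_refl x : leJ mul x x. Proof. by apply/leJP; exists None, None. Qed.
Lemma leR_trans x y z : leR mul x y -> leR mul y z -> leR mul x z.
Proof. by move=> /leRP[a ->] /leRP[b ->]; apply/leRP; exists (om b a); rewrite rm_rm. Qed.
Lemma leL_trans x y z : leL mul x y -> leL mul y z -> leL mul x z.
Proof. by move=> /leLP[a ->] /leLP[b ->]; apply/leLP; exists (om a b); rewrite lm_lm. Qed.
Lemma leJ_trans x y z : leJ mul x y -> leJ mul y z -> leJ mul x z.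
Proof.
move=> /leJP[a [b ->]] /leJP[c [d ->]]; apply/leJP; exists (om a c), (om d b).
by rewrite lm_rm rm_rm lm_lm.
Qed.
Lemma leR_J x y : leR mul x y -> leJ mul x y.
Proof. by move=> /leRP[a ->]; apply/leJP; exists None, a. Qed.
Lemma leL_J x y : leL mul x y -> leJ mul x y.
Proof. by move=> /leLP[a ->]; apply/leJP; exists a, None. Qed.
Lemma leR_mul x y : leR mul (x ⋅ y) x.
Proof. by apply/leRP; exists (Some y). Qed.
Lemma leL_mul x y : leL mul (x ⋅ y) y.
Proof. by apply/leLP; exists (Some x). Qed.
Lemma leJ_mull x y : leJ mul (x ⋅ y) x. Proof. exact/leR_J/leR_mul. Qed.
Lemma leJ_mulr x y : leJ mul (x ⋅ y) y. Proof. exact/leL_J/leL_mul. Qed.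

(* powers q^(n+1) *)
Fixpoint qp (q : S) (n : nat) : S := if n is n'.+1 then qp q n' ⋅ q else q.
Lemma qpS q n : qp q n.+1 = q ⋅ qp q n.
Proof. by elim: n => //= n IH; rewrite {1}IH mulA. Qed.
Lemma qpD q a b : qp q (a + b).+1 = qp q a ⋅ qp q b.
Proof.
elim: b => [|b IH]; first by rewrite addn0.
rewrite addnS; change (qp q (a+b).+1 ⋅ q = qp q a ⋅ (qp q b ⋅ q)).
by rewrite IH mulA.
Qed.

Lemma qp_rm q k : exists o, qp q k = rm q o.
Proof. by case: k => [|k]; [exists None | exists (Some (qp q k)); rewrite qpS]. Qed.

Lemma loop_R x (p : option S) q : x = lm p (x ⋅ q) -> leR mul x (x ⋅ q).
Proof.
move=> Hx.
have Hn : forall n, exists po, x = lm po (x ⋅ qp q n).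
  elim=> [|n [po IH]]; first by exists p.
  by exists (om po p); rewrite qpS mulA -lm_lm lm_mul -Hx.
have Hij : forall i j, i < j -> qp q i = qp q j -> leR mul x (x ⋅ q).
  move=> i j lij Eij; have [po Hpo] := Hn i.
  set k := (j - i).-1.
  have Ej : j = (i + k).+1 by rewrite /k -addnS prednK ?subn_gt0 // subnKC // ltnW.
  have Hk : x = x ⋅ qp q k.
    by rewrite {1}Hpo Eij Ej qpD mulA lm_mul -Hpo.
  have [o Ho] := qp_rm q k.
  by apply/leRP; exists o; rewrite rm_mul -Ho -Hk.
pose f (i : 'I_#|S|.+1) := qp q i.
have : ~~ injectiveb f.
  by apply/injectiveP => /leq_card; rewrite card_ord ltnn.
case/dinjectivePn => i _ [j]; rewrite inE => /andP[nij _] Efij.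
have [lij|lji|eij] := ssrnat.ltngtP (nat_of_ord i) (nat_of_ord j).
- exact: (Hij i j).
- exact: (Hij j i).
- by move: nij; rewrite -val_eqE /= eij eqxx.
Qed.

End Green1.
Section Green2.
Variables (S : finType) (mul : S -> S -> S) (mulA : associative mul).
Local Open Scope nat_scope.
Local Notation "x ⋅ y" := (mul x y) (at level 40, left associativity).

Lemma stabR x y : leR mul x y -> leJ mul y x -> leR mul y x.
Proof.
move=> /leRP[a Ex] /leJP[o1 [o2 Ey]].
rewrite -(lm_rm mulA) Ex (rm_rm mulA) in Ey.
case E: (om mul a o2) Ey => [q|] Ey.
- apply: leR_trans (loop_R mulA Ey) _ => //.
  by apply/leRP; exists o2; rewrite Ex (rm_rm mulA) E.
- by move: E; case: a Ex => [?|] Ex; case: o2 => //= _; rewrite Ex leR_refl.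
Qed.

End Green2.

Section Green2b.
Variables (S : finType) (mul : S -> S -> S) (mulA : associative mul).
Local Open Scope nat_scope.
Local Notation "x ⋅ y" := (mul x y) (at level 40, left associativity).
Let mulr := fun x y => mul y x.
Let mulrA : associative mulr. Proof. by move=> x y z; rewrite /mulr mulA. Qed.
Lemma leJ_rev x y : leJ mulr x y = leJ mul x y.
Proof.
apply/idP/idP => /leJP[a [b E]]; apply/leJP; exists b, a; move: E;
  by case: a => [?|]; case: b => [?|] /= ->; rewrite /mulr ?mulA.
Qed.

Lemma stabL x y : leL mul x y -> leJ mul y x -> leL mul y x.
Proof. move=> H1 H2; have h := @stabR S mulr mulrA x y H1; rewrite leJ_rev in h; exact: (h H2). Qed.

End Green2b.

Section Green2c.
Variables (S : finType) (mul : S -> S -> S) (mulA : associative mul).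
Local Open Scope nat_scope.
Local Notation "x ⋅ y" := (mul x y) (at level 40, left associativity).
Lemma Rrel_sym x y : Rrel mul x y = Rrel mul y x. Proof. by rewrite /Rrel andbC. Qed.
Lemma Lrel_sym x y : Lrel mul x y = Lrel mul y x. Proof. by rewrite /Lrel andbC. Qed.
Lemma Rrel_trans x y z : Rrel mul x y -> Rrel mul y z -> Rrel mul x z.
Proof. by move=> /andP[a b] /andP[c d]; apply/andP; split; apply: leR_trans mulA _ _ _ _ _; eauto. Qed.
Lemma Lrel_trans x y z : Lrel mul x y -> Lrel mul y z -> Lrel mul x z.
Proof. by move=> /andP[a b] /andP[c d]; apply/andP; split; apply: leL_trans mulA _ _ _ _ _; eauto. Qed.
Lemma Rrel_refl x : Rrel mul x x. Proof. by rewrite /Rrel leR_refl. Qed.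
Lemma Lrel_refl x : Lrel mul x x. Proof. by rewrite /Lrel leL_refl. Qed.

Lemma Drel_RL x y z : Rrel mul x y -> Lrel mul y z -> Drel mul x z.
Proof.
move=> h1 h2; apply: connect_trans (connect1 _) (connect1 _).
- by apply/orP; left; exact: h1.
- by apply/orP; right; exact: h2.
Qed.

Lemma JD x y : leJ mul x y -> leJ mul y x -> Drel mul x y.
Proof.
move=> /leJP[a [b Ex]] /leJP[c [d Ey]].
set z := rm mul x d.
have Rzx : Rrel mul x z.
  apply/andP; split; last by apply/leRP; exists d.
  apply: (stabR mulA); first by apply/leRP; exists d.
  apply/leJP; exists (om mul a c), b.
  by rewrite {1}Ex Ey (lm_rm mulA) (lm_lm mulA) /z (lm_rm mulA).
have Lyz : Lrel mul z y.
  apply/andP; split; last by apply/leLP; exists c; rewrite Ey /z (lm_rm mulA).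
  apply: (stabL mulA); first by apply/leLP; exists c; rewrite Ey /z (lm_rm mulA).
  by apply/leJP; exists a, (om mul b d); rewrite /z Ex (rm_rm mulA).
exact: Drel_RL Rzx Lyz.
Qed.

Lemma DJ x y : Drel mul x y -> leJ mul x y && leJ mul y x.
Proof.
move/connectP=> [p]; elim: p x => [|z p IH] x /=; first by move=> _ ->; rewrite leJ_refl.
case/andP => exz pz ly; case/andP: (IH z pz ly) => h1 h2.
have [h3 h4] : leJ mul x z /\ leJ mul z x.
  by case/orP: exz => /andP[u v]; split; first [exact: leR_J | exact: leL_J].
by rewrite (leJ_trans mulA h3 h1) (leJ_trans mulA h2 h4).
Qed.

Lemma Drel_J x y : Drel mul x y = leJ mul x y && leJ mul y x.
Proof. by apply/idP/idP => [/DJ|/andP[]/JD]. Qed.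

Lemma Drel_refl x : Drel mul x x. Proof. by rewrite Drel_J leJ_refl. Qed.
Lemma Drel_sym x y : Drel mul x y = Drel mul y x. Proof. by rewrite !Drel_J andbC. Qed.
Lemma Drel_trans x y z : Drel mul x y -> Drel mul y z -> Drel mul x z.
Proof.
rewrite !Drel_J => /andP[a b] /andP[c d].
by rewrite (leJ_trans mulA a c) (leJ_trans mulA d b).
Qed.
Lemma Drel_R x y : Rrel mul x y -> Drel mul x y.
Proof. by move=> h; apply: connect1; rewrite h. Qed.
Lemma Drel_L x y : Lrel mul x y -> Drel mul x y.
Proof. by move=> h; apply: connect1; rewrite h orbT. Qed.

Lemma Dclass_eq x y : Drel mul x y -> Dclass mul x = Dclass mul y.
Proof.
move=> h; apply/setP => z; rewrite !inE; apply/idP/idP => h2.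
- by apply: Drel_trans h2; rewrite Drel_sym.
- exact: Drel_trans h2.
Qed.
Lemma Lclass_eq x y : Lrel mul x y -> Lclass mul x = Lclass mul y.
Proof.
move=> h; apply/setP => z; rewrite !inE; apply/idP/idP => h2.
- by apply: Lrel_trans h2; rewrite Lrel_sym.
- exact: Lrel_trans h2.
Qed.
Lemma Dclass_refl x : x \in Dclass mul x. Proof. by rewrite inE Drel_refl. Qed.
Lemma Lclass_refl x : x \in Lclass mul x. Proof. by rewrite inE Lrel_refl. Qed.

Lemma Dclasses_mem D y : D \in Dclasses mul -> y \in D -> D = Dclass mul y.
Proof. by case/imsetP => x _ -> ; rewrite inE => /Dclass_eq. Qed.
Lemma Dclass_in y : Dclass mul y \in Dclasses mul.
Proof. by apply/imsetP; exists y. Qed.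

End Green2c.
Section Star.
Variables (S : finType) (mul : S -> S -> S) (mulA : associative mul).
Variables (star : S -> S) (hstar : anti_involution mul star).
Local Open Scope nat_scope.
Local Notation "x ⋅ y" := (mul x y) (at level 40, left associativity).

Lemma sinv : involutive star. Proof. by case: hstar. Qed.
Lemma smul x y : star (x ⋅ y) = star y ⋅ star x. Proof. by case: hstar. Qed.
Lemma star_inj : injective star. Proof. exact: inv_inj sinv. Qed.

Lemma leR_star x y : leR mul (star x) (star y) = leL mul x y.
Proof.
apply/leRP/leLP => -[o E].
- exists (omap star o); apply: star_inj; rewrite E.
  by case: o {E} => [z|] //=; rewrite smul sinv.
- exists (omap star o); rewrite E.
  by case: o {E} => [z|] //=; rewrite smul.
Qed.
Lemma leL_star x y : leL mul (star x) (star y) = leR mul x y.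
Proof. by rewrite -leR_star !sinv. Qed.
Lemma leJ_star x y : leJ mul (star x) (star y) = leJ mul x y.
Proof.
suff H : forall x y, leJ mul x y -> leJ mul (star x) (star y).
  by apply/idP/idP => [/H|/H//]; rewrite !sinv.
move=> {}x {}y /leJP[a [b ->]]; apply/leJP; exists (omap star b), (omap star a).
by case: a; case: b => /= *; rewrite ?smul ?mulA.
Qed.
Lemma Rrel_star x y : Rrel mul (star x) (star y) = Lrel mul x y.
Proof. by rewrite /Rrel /Lrel !leR_star. Qed.
Lemma Lrel_star x y : Lrel mul (star x) (star y) = Rrel mul x y.
Proof. by rewrite /Rrel /Lrel !leL_star. Qed.
Lemma Drel_star x y : Drel mul (star x) (star y) = Drel mul x y.
Proof. by rewrite !(Drel_J mulA) !leJ_star. Qed.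
End Star.
Section DStruct.
Variables (S : finType) (mul : S -> S -> S) (mulA : associative mul).
Variables (star : S -> S) (hstar : anti_involution mul star).
Variables (one : {set S} -> S)
  (A2 : forall D, D \in Dclasses mul ->
          [/\ one D \in D, mul (one D) (one D) = one D & star (one D) = one D]).
Variables (u : {set S} -> S)
  (hu : forall D, D \in Dclasses mul -> forall L, L \in LclassesIn mul D ->
          u L \in L /\ Rrel mul (u L) (one D)).
Local Open Scope nat_scope.
Local Notation "x ⋅ y" := (mul x y) (at level 40, left associativity).
Local Notation rm := (rm mul).
Local Notation lm := (lm mul).

Section OneD.
Variables (D : {set S}) (hD : D \in Dclasses mul).
Local Notation e := (one D).
Local Notation G := (GD mul star one D).
Local Notation LDD := (LD mul one D).
Local Notation LDsD := (LDs mul star one D).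

Lemma e_in : e \in D. Proof. by case: (A2 hD). Qed.
Lemma e_idem : e ⋅ e = e. Proof. by case: (A2 hD). Qed.
Lemma e_star : star e = e. Proof. by case: (A2 hD). Qed.
Lemma D_eq : D = Dclass mul e. Proof. exact: Dclasses_mem hD e_in. Qed.
Lemma inD y : (y \in D) = Drel mul e y. Proof. by rewrite {1}D_eq inE. Qed.
Lemma inLD y : (y \in LDD) = Lrel mul e y. Proof. by rewrite /LD inE. Qed.
Lemma inLDs y : (y \in LDsD) = Rrel mul e y.
Proof.
rewrite /LDs; apply/imsetP/idP => [[x]|h].
- by rewrite inLD => h ->; rewrite -(Rrel_star hstar) e_star in h.
- exists (star y); last by rewrite (sinv hstar).
  by rewrite inLD -(Rrel_star hstar) e_star (sinv hstar).
Qed.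
Lemma inG y : (y \in G) = Lrel mul e y && Rrel mul e y.
Proof. by rewrite /GD inE inLD inLDs. Qed.
Lemma G_LD y : y \in G -> y \in LDD. Proof. by rewrite inG inLD => /andP[]. Qed.
Lemma G_LDs y : y \in G -> y \in LDsD. Proof. by rewrite inG inLDs => /andP[]. Qed.

Lemma LD_e y : y \in LDD -> y ⋅ e = y.
Proof. by rewrite inLD => /andP[_ /leLP[o ->]]; rewrite -(lm_mul mulA) e_idem. Qed.
Lemma LDs_e y : y \in LDsD -> e ⋅ y = y.
Proof. by rewrite inLDs => /andP[_ /leRP[o ->]]; rewrite -(rm_mul mulA) e_idem. Qed.

Lemma prodLR a b : a \in LDD -> b \in LDsD -> Rrel mul (a ⋅ b) a && Lrel mul (a ⋅ b) b.
Proof.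
move=> ha hb; apply/andP; split; apply/andP; split.
- exact: leR_mul.
- move: (hb); rewrite inLDs => /andP[/leRP[q Eq] _].
  by apply/leRP; exists q; rewrite (rm_mul mulA) -Eq LD_e.
- exact: leL_mul.
- move: (ha); rewrite inLD => /andP[/leLP[p Ep] _].
  by apply/leLP; exists p; rewrite (lm_mul mulA) -Ep LDs_e.
Qed.

Lemma mul_LD_G a g : a \in LDD -> g \in G -> a ⋅ g \in LDD.
Proof.
move=> ha hg; case/andP: (prodLR ha (G_LDs hg)) => _ h.
rewrite inLD; apply: (Lrel_trans mulA (y:=g)); [by rewrite -inLD G_LD | by rewrite Lrel_sym].
Qed.
Lemma mul_G_LDs g b : g \in G -> b \in LDsD -> g ⋅ b \in LDsD.
Proof.
move=> hg hb; case/andP: (prodLR (G_LD hg) hb) => h _.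
rewrite inLDs; apply: (Rrel_trans mulA (y:=g)); [by rewrite -inLDs G_LDs | by rewrite Rrel_sym].
Qed.
Lemma mul_GG g h : g \in G -> h \in G -> g ⋅ h \in G.
Proof.
move=> hg hh; rewrite /GD inE mul_LD_G ?G_LD //.
by rewrite mul_G_LDs // G_LDs.
Qed.
Lemma mul_LD_LDs a b : a \in LDD -> b \in LDsD -> a ⋅ b \in D.
Proof.
move=> ha hb; case/andP: (prodLR ha hb) => h _.
rewrite inD; apply: (Drel_trans mulA (y := a)); first by apply: Drel_L; rewrite -inLD.
by apply: Drel_R; rewrite Rrel_sym.
Qed.

Lemma star_LD y : (star y \in LDsD) = (y \in LDD).
Proof. by rewrite inLDs inLD -{1}e_star (Rrel_star hstar). Qed.
Lemma star_LDs y : (star y \in LDD) = (y \in LDsD).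
Proof. by rewrite -star_LD (sinv hstar). Qed.
Lemma star_G y : (star y \in G) = (y \in G).
Proof. by rewrite /GD !in_setI star_LD star_LDs andbC. Qed.
Lemma star_D y : (star y \in D) = (y \in D).
Proof. by rewrite !inD -{1}e_star (Drel_star mulA hstar). Qed.

Lemma Lclass_in y : y \in D -> Lclass mul y \in LclassesIn mul D.
Proof. by move=> hy; apply/imsetP; exists y. Qed.

Section UL.
Variables (L : {set S}) (hL : L \in LclassesIn mul D).
Lemma uL_in : u L \in L. Proof. by case: (hu hD hL). Qed.
Lemma uL_R : Rrel mul (u L) e. Proof. by case: (hu hD hL). Qed.
Lemma uL_LDs : u L \in LDsD. Proof. by rewrite inLDs Rrel_sym uL_R. Qed.
Lemma suL_LD : star (u L) \in LDD. Proof. by rewrite star_LDs uL_LDs. Qed.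
Lemma L_eq : L = Lclass mul (u L).
Proof.
case/imsetP: hL => x _ EL.
have h : u L \in Lclass mul x by rewrite -EL uL_in.
rewrite inE in h.
by rewrite [LHS]EL (Lclass_eq mulA h).
Qed.
Lemma uL_D : u L \in D.
Proof. by rewrite inD; apply: Drel_R; rewrite Rrel_sym uL_R. Qed.
End UL.

Definition xg L g K := star (u L) ⋅ g ⋅ u K.

Lemma mul_lm x o y : x ⋅ lm o y = rm x o ⋅ y.
Proof. by case: o => //= z; rewrite mulA. Qed.

Section XG.
Variables (L K : {set S}) (hL : L \in LclassesIn mul D) (hK : K \in LclassesIn mul D).

Lemma xg_D g : g \in G -> xg L g K \in D.
Proof. move=> hg; exact: mul_LD_LDs (mul_LD_G (suL_LD hL) hg) (uL_LDs hK). Qed.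
Lemma xg_K g : g \in G -> Lclass mul (xg L g K) = K.
Proof.
move=> hg; case/andP: (prodLR (mul_LD_G (suL_LD hL) hg) (uL_LDs hK)) => _ h.
by rewrite (Lclass_eq mulA h) -L_eq.
Qed.
Lemma star_xg g : star (xg L g K) = xg K (star g) L.
Proof. by rewrite /xg !(smul hstar) (sinv hstar) mulA. Qed.

Lemma xg_cancel g g' : g \in G -> g' \in G -> xg L g K = xg L g' K -> g = g'.
Proof.
have := suL_LD hL; rewrite inLD => /andP[/leLP[r Er] _].
have := uL_LDs hK; rewrite inLDs => /andP[/leRP[q Eq] _].
suff H : forall g, g \in G -> lm r (rm (xg L g K) q) = g.
  by move=> hg hg' E; rewrite -(H g hg) E H.
move=> k hk; rewrite /xg (rm_mul mulA) -Eq !(lm_mul mulA) -Er.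
by rewrite LDs_e ?G_LDs // LD_e ?G_LD ?mul_GG.
Qed.
End XG.

Lemma xg_L L K g : L \in LclassesIn mul D -> K \in LclassesIn mul D -> g \in G ->
  Lclass mul (star (xg L g K)) = L.
Proof. by move=> hL hK hg; rewrite star_xg xg_K // star_G. Qed.

Lemma xg_exists z : z \in D ->
  exists2 g, g \in G & z = xg (Lclass mul (star z)) g (Lclass mul z).
Proof.
move=> hz.
set L := Lclass mul (star z); set K := Lclass mul z.
have hL : L \in LclassesIn mul D by apply: Lclass_in; rewrite star_D.
have hK : K \in LclassesIn mul D by apply: Lclass_in.
have LzuL : Lrel mul (star z) (u L) by have := uL_in hL; rewrite inE.
have Rza : Rrel mul z (star (u L)) by rewrite -(Rrel_star hstar) (sinv hstar) in LzuL *.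
have Lzb : Lrel mul z (u K) by have := uL_in hK; rewrite inE.
have := suL_LD hL; rewrite inLD => /andP[/leLP[r Er] _].
have := uL_LDs hK; rewrite inLDs => /andP[/leRP[q Eq] _].
case/andP: Rza => /leRP[p Ep] /leRP[t Et].
case/andP: Lzb => /leLP[p' Ep'] /leLP[t' Et'].
have aLD : star (u L) \in LDD by exact: suL_LD.
have bLDs : u K \in LDsD by exact: uL_LDs.
set a := star (u L) in Er Ep Et aLD *; set b := u K in Eq Ep' Et' bLDs *.
have I1 : rm a r ⋅ z = z.
  by rewrite {2}Ep {1}Ep -(rm_mul mulA) -mul_lm -Er LD_e.
have I2 : rm z q ⋅ b = z.
  by rewrite -mul_lm {1}Ep' -(lm_mul mulA) mul_lm -Eq LDs_e // -Ep'.
set g := lm r (rm z q).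
have Ez : z = a ⋅ g ⋅ b by rewrite /g mul_lm -(rm_mul mulA) I1 I2.
have eg : one D ⋅ g = g.
  by rewrite /g Er -(lm_mul mulA) mul_lm -(rm_mul mulA) I1.
have ge : g ⋅ one D = g.
  by rewrite /g -(lm_mul mulA) Eq -(rm_mul mulA) I2.
exists g => //.
rewrite inG; apply/andP; split; apply/andP; split.
- apply/leLP; exists (Some (lm t' a)) => /=.
  by rewrite Eq Et' Ez !(lm_mul mulA) (rm_mul mulA) -Eq -mulA ge.
- by apply/leLP; exists (Some g) => /=; rewrite ge.
- apply/leRP; exists (Some (rm b t)) => /=.
  by rewrite Er Et Ez (rm_mul mulA) !(lm_mul mulA) -Er eg.
- by apply/leRP; exists (Some g) => /=; rewrite eg.
Qed.
End OneD.

Definition hz z := odflt z [pick g in GD mul star one (Dclass mul z) |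
   z == xg (Lclass mul (star z)) g (Lclass mul z)].

Lemma hz_spec z : hz z \in GD mul star one (Dclass mul z) /\
   z = xg (Lclass mul (star z)) (hz z) (Lclass mul z).
Proof.
have hD := Dclass_in mul z.
have [g hg Eg] := xg_exists hD (Dclass_refl mulA z).
rewrite /hz; case: pickP => [k /andP[hk /eqP Ek]|H] //=.
by move: (H g); rewrite hg -Eg eqxx.
Qed.

Lemma sameD D x y : D \in Dclasses mul -> x \in D -> y \in D -> Drel mul x y.
Proof. by move=> hD hx; rewrite (Dclasses_mem mulA hD hx) inE. Qed.

Lemma xg_unique D L K g : D \in Dclasses mul -> L \in LclassesIn mul D ->
  K \in LclassesIn mul D -> g \in GD mul star one D ->
  [/\ Dclass mul (xg L g K) = D, Lclass mul (star (xg L g K)) = L,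
      Lclass mul (xg L g K) = K & hz (xg L g K) = g].
Proof.
move=> hD hL hK hg.
have hz1 : xg L g K \in D by exact: xg_D.
have ED : Dclass mul (xg L g K) = D by rewrite (Dclasses_mem mulA hD hz1).
have EL := xg_L hD hL hK hg; have EK := xg_K hD hL hK hg.
split => //.
have [h1 h2] := hz_spec (xg L g K); rewrite ED EL EK in h1 h2.
by apply: (xg_cancel hD hL hK) => //; rewrite -h2.
Qed.

Lemma LD_in D y : D \in Dclasses mul -> y \in LD mul one D -> y \in D.
Proof. by move=> hD; rewrite (inLD D) (inD hD) => /Drel_L. Qed.

Lemma LD_decomp D y : D \in Dclasses mul -> y \in LD mul one D ->
  exists2 h, h \in GD mul star one D & y = star (u (Lclass mul (star y))) ⋅ h.
Proof.
move=> hD hy; have yD := LD_in hD hy.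
have [g hg Ey] := xg_exists hD yD.
have hK : Lclass mul y \in LclassesIn mul D by apply: Lclass_in.
have uG : u (Lclass mul y) \in GD mul star one D.
  rewrite /GD inE (uL_LDs hD hK) andbT (inLD D).
  have := uL_in hD hK; rewrite inE => h2.
  by apply: (Lrel_trans mulA (y := y)) h2; rewrite -(inLD D).
exists (g ⋅ u (Lclass mul y)); first exact: mul_GG.
by rewrite {1}Ey /xg mulA.
Qed.

Lemma caseA D x a k : D \in Dclasses mul -> a \in LD mul one D ->
  x ⋅ a ⋅ k \in D -> x ⋅ a \in LD mul one D.
Proof.
move=> hD ha hk; rewrite (inLD D); apply/andP; split; last first.
  apply: (leL_trans mulA (leL_mul mul _ _)).
  by move: ha; rewrite (inLD D) => /andP[].
apply: (stabL mulA).
  apply: (leL_trans mulA (leL_mul mul _ _)).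
  by move: ha; rewrite (inLD D) => /andP[].
have := sameD hD (e_in hD) hk; rewrite (Drel_J mulA) => /andP[h _].
exact (leJ_trans mulA h (leJ_mull mul (x ⋅ a) k)).
Qed.

Lemma lowerD D z d : D \in Dclasses mul -> d \in D -> leJ mul z d -> z \notin D ->
  ltDcl mul (Dclass mul z) D.
Proof.
move=> hD hd hzd hz; rewrite /ltDcl; apply/andP; split.
- by apply/existsP; exists z; rewrite Dclass_refl //=; apply/existsP; exists d; rewrite hd.
- by apply: contraNneq hz => <-; rewrite Dclass_refl.
Qed.

Lemma leDcl_antisym D1 D2 : D1 \in Dclasses mul -> D2 \in Dclasses mul ->
  leDcl mul D1 D2 -> leDcl mul D2 D1 -> D1 = D2.
Proof.
move=> h1 h2 /existsP[x1 /andP[hx1 /existsP[y2 /andP[hy2 j1]]]].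
move=> /existsP[x2 /andP[hx2 /existsP[y1 /andP[hy1 j2]]]].
have := sameD h2 hy2 hx2; rewrite (Drel_J mulA) => /andP[j3 _].
have := sameD h1 hy1 hx1; rewrite (Drel_J mulA) => /andP[j4 _].
have j5 : leJ mul y2 x1.
  exact (leJ_trans mulA j3 (leJ_trans mulA j2 j4)).
have Dx := JD mulA j1 j5.
by rewrite (Dclasses_mem mulA h1 hx1) (Dclasses_mem mulA h2 hy2) (Dclass_eq mulA Dx).
Qed.

Lemma leDcl_trans D1 D2 D3 : D2 \in Dclasses mul ->
  leDcl mul D1 D2 -> leDcl mul D2 D3 -> leDcl mul D1 D3.
Proof.
move=> h2 /existsP[x1 /andP[hx1 /existsP[y2 /andP[hy2 j1]]]].
move=> /existsP[x2 /andP[hx2 /existsP[y3 /andP[hy3 j2]]]].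
have := sameD h2 hy2 hx2; rewrite (Drel_J mulA) => /andP[j3 _].
apply/existsP; exists x1; rewrite hx1; apply/existsP; exists y3; rewrite hy3 /=.
exact (leJ_trans mulA j1 (leJ_trans mulA j3 j2)).
Qed.

Lemma ltDcl_trans D1 D2 D3 : D1 \in Dclasses mul -> D2 \in Dclasses mul ->
  ltDcl mul D1 D2 -> ltDcl mul D2 D3 -> ltDcl mul D1 D3.
Proof.
move=> h1 h2 /andP[a b] /andP[c d]; apply/andP; split; first exact: (leDcl_trans h2 a c).
apply/negP => /eqP E; move/negP: b; apply; apply/eqP.
by apply: (leDcl_antisym h1 h2 a); rewrite E.
Qed.

End DStruct.
Lemma sum_fst (R : nmodType) (T1 T2 : finType) (P : pred (T1 * T2)) (a : T1)
  (F : T1 * T2 -> R) :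
  (forall p, P p -> p.1 != a -> F p = 0) ->
  \sum_(p | P p) F p = \sum_(b | P (a, b)) F (a, b).
Proof.
move=> H.
have -> : \sum_(p | P p) F p = \sum_(p | predT p.1 && P (p.1, p.2)) F (p.1, p.2).
  by apply: eq_big => -[x y].
rewrite -(pair_big_dep predT (fun i j => P (i, j)) (fun i j => F (i, j))) /=.
rewrite (bigD1 a) //= [X in _ + X]big1 ?addr0 // => i ni.
by apply: big1 => j Pj; apply: H.
Qed.

Section FAlg.
Variables (S : finType) (R : comPzRingType).
Implicit Types (a b : {ffun S -> R}) (r : R).

Lemma fscaleE r a (z : S) : fscale r a z = r * a z. Proof. by rewrite ffunE. Qed.
Lemma basisE (x z : S) : basis_el R x z = (z == x)%:R. Proof. by rewrite ffunE. Qed.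
Lemma fscale0 a : fscale 0 a = 0.
Proof. by apply/ffunP => z; rewrite !ffunE mul0r. Qed.
Lemma fscaler0 r : fscale r (0 : {ffun S -> R}) = 0.
Proof. by apply/ffunP => z; rewrite !ffunE mulr0. Qed.
Lemma fscaleD r a b : fscale r (a + b) = fscale r a + fscale r b.
Proof. by apply/ffunP => z; rewrite !ffunE mulrDr. Qed.
Lemma fscaleDl r1 r2 a : fscale (r1 + r2) a = fscale r1 a + fscale r2 a.
Proof. by apply/ffunP => z; rewrite !ffunE mulrDl. Qed.
Lemma fscale1 a : fscale 1 a = a.
Proof. by apply/ffunP => z; rewrite !ffunE mul1r. Qed.
Lemma fscaleNl r a : fscale (- r) a = - fscale r a.
Proof. by apply/ffunP => z; rewrite !ffunE mulNr. Qed.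
Lemma fscaleN r a : fscale r (- a) = - fscale r a.
Proof. by apply/ffunP => z; rewrite !ffunE mulrN. Qed.
Lemma fscaleA r1 r2 a : fscale r1 (fscale r2 a) = fscale (r1 * r2) a.
Proof. by apply/ffunP => z; rewrite !ffunE mulrA. Qed.
Lemma fscale_sumr r (I : finType) (P : pred I) (F : I -> {ffun S -> R}) :
  fscale r (\sum_(i | P i) F i) = \sum_(i | P i) fscale r (F i).
Proof.
by apply/ffunP => z; rewrite fscaleE !sum_ffunE mulr_sumr; apply: eq_bigr => i _; rewrite fscaleE.
Qed.

Lemma tmul_basis_sum (mul : S -> S -> S) (tw : S -> S -> R) x (I : finType) (P : pred I)
  (f : I -> R) (y : I -> S) :
  tmul mul tw (basis_el R x) (\sum_(i | P i) fscale (f i) (basis_el R (y i))) =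
  \sum_(i | P i) fscale (f i * tw x (y i)) (basis_el R (mul x (y i))).
Proof.
apply/ffunP => z; rewrite ffunE sum_ffunE.
rewrite (bigD1 x) //= [X in _ + X]big1 => [|x' nx']; last first.
  by apply: big1 => y' _; rewrite basisE (negbTE nx') mulr0n !mul0r.
rewrite addr0 basisE eqxx mulr1n.
under eq_bigr => y0 _ do rewrite mul1r sum_ffunE mulr_suml.
rewrite exchange_big /=; apply: eq_bigr => i Pi.
rewrite fscaleE basisE; under eq_bigr => y0 _ do rewrite fscaleE basisE.
rewrite big_mkcond (bigD1 (y i)) //= [X in _ + X]big1 => [|y0 ny]; last first.
  by case: ifP => // _; rewrite (negbTE ny) mulr0n mulr0 mul0r.
rewrite addr0 eqxx mulr1n mulr1 eq_sym.
by case: (z == _); rewrite ?mulr1n ?mulr0n ?mulr1 ?mulr0.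
Qed.


Lemma tmul_decomp (mul : S -> S -> S) (tw : S -> S -> R) a b z :
  tmul mul tw a b z = \sum_x a x * tmul mul tw (basis_el R x) b z.
Proof.
rewrite ffunE; apply: eq_bigr => x _; rewrite ffunE [in RHS](bigD1 x) //=.
rewrite [X in _ = _ * (_ + X)]big1 => [|x' nx']; last first.
  by apply: big1 => y _; rewrite basisE (negbTE nx') mulr0n !mul0r.
rewrite addr0 mulr_sumr; apply: eq_bigr => y _.
by rewrite basisE eqxx mulr1n mul1r !mulrA.
Qed.

Lemma supp_decomp (A : {set S}) (c : {ffun S -> R}) : (forall y, y \notin A -> c y = 0) ->
  c = \sum_(g in A) fscale (c g) (basis_el R g).
Proof.
move=> H; apply/ffunP => z; rewrite sum_ffunE.
under eq_bigr => g _ do rewrite fscaleE basisE.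
case: (boolP (z \in A)) => hz.
- rewrite (bigD1 z) //= eqxx mulr1n mulr1 [X in _ + X]big1 ?addr0 // => g /andP[_ ng].
  by rewrite eq_sym (negbTE ng) mulr0n mulr0.
- rewrite H // big1 // => g hg; case: eqP => [E|]; last by rewrite mulr0n mulr0.
  by move: hz; rewrite E hg.
Qed.
End FAlg.
Section Alg.
Variables (S : finType) (mul : S -> S -> S) (mul_assoc : associative mul)
  (star : S -> S) (hstar : anti_involution mul star)
  (R : comPzRingType) (alpha : S -> S -> R) (halpha : twisting mul alpha)
  (A1 : forall x y, alpha x y = alpha (star y) (star x))
  (one : {set S} -> S)
  (A2 : forall D, D \in Dclasses mul ->
          [/\ one D \in D, mul (one D) (one D) = one D & star (one D) = one D])
  (beta : {set S} -> S -> S -> R)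
  (A3 : forall D, D \in Dclasses mul ->
     let L := LD mul one D in let Ls := LDs mul star one D in
     [/\ (forall x y, x \in L -> y \in Ls -> is_unit (beta D x y)),
         (forall x y z, x \in L -> y \in Ls -> mul x y \in L -> z \in Ls ->
             mul y z \in Ls -> y \in L ->
             beta D x y * beta D (mul x y) z = beta D x (mul y z) * beta D y z),
         (forall x y z, mul x y \in L -> z \in Ls -> y \in L ->
             alpha x y * beta D (mul x y) z = alpha x (mul y z) * beta D y z)
       & (forall x y, x \in L -> y \in Ls -> star y \in L -> star x \in Ls ->
             beta D x y = beta D (star y) (star x))])
  (Lam : finType) (LamD : {set S} -> {set Lam}) (leD : {set S} -> rel Lam)
  (Mt : finType) (MD : {set S} -> Lam -> {set Mt})
  (CD : {set S} -> Lam -> Mt -> Mt -> {ffun S -> R})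
  (A4 : forall D, D \in Dclasses mul ->
     cellular (fun a : {ffun S -> R} =>
                 forall x, x \notin GD mul star one D -> a x = 0)
              (tmul mul (beta D)) (fstar star)
              (LamD D) (leD D) (MD D) (CD D))
  (u : {set S} -> S)
  (hu : forall D, D \in Dclasses mul -> forall L, L \in LclassesIn mul D ->
          u L \in L /\ Rrel mul (u L) (one D)).

Local Notation "x ⋅ y" := (mul x y) (at level 40, left associativity).
Local Notation fS := {ffun S -> R}.
Local Notation BL := (bigLam mul LamD).
Local Notation BLe := (bigLe mul leD).
Local Notation BM := (bigM mul MD).
Local Notation BC := (bigC mul star one beta CD u).
Local Notation G D := (GD mul star one D).
Local Notation Dcl := (Dclasses mul).
Local Notation LIn D := (LclassesIn mul D).
Local Notation xg := (xg mul star u).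
Local Notation hz := (hz mul star one u).
Local Notation basis := (basis_el R).

Local Notation suLD := (suL_LD hstar A2 hu).
Local Notation uLs := (uL_LDs hstar A2 hu).
Local Notation GLs := (G_LDs hstar A2).
Local Notation GL := (G_LD hstar A2).
Local Notation mLG := (mul_LD_G mul_assoc hstar A2).
Local Notation mGLs := (mul_G_LDs mul_assoc hstar A2).
Local Notation mGG := (mul_GG mul_assoc hstar A2).
Local Notation mLLs := (mul_LD_LDs mul_assoc hstar A2).
Local Notation starD := (star_D mul_assoc hstar A2).
Local Notation xgU := (xg_unique mul_assoc hstar A2 hu).
Local Notation hzS := (hz_spec mul_assoc hstar A2 hu).
Local Notation LDdec := (LD_decomp mul_assoc hstar A2 hu).
Local Notation cA := (caseA mul_assoc A2).
Local Notation lwD := (lowerD mul_assoc).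
Local Notation starG := (star_G hstar A2).
Local Notation starLD := (star_LD hstar A2).
Local Notation starLDs := (star_LDs hstar A2).
Local Notation xgD := (xg_D mul_assoc hstar A2 hu).
Local Notation xgK := (xg_K mul_assoc hstar A2 hu).
Local Notation xgL := (xg_L mul_assoc hstar A2 hu).
Local Notation starxg := (star_xg mul_assoc hstar u).
Local Notation LDin := (LD_in mul_assoc A2).
Local Notation einD := (e_in A2).

Definition wD D L K g := beta D (star (u L)) g * beta D (star (u L) ⋅ g) (u K).
Definition Phi D L K (c : fS) : fS :=
  \sum_(g in G D) fscale (c g * wD D L K g) (basis (xg L g K)).
Definition combD D (c : Lam -> Mt -> Mt -> R) := comb (LamD D) (MD D) (CD D) c.

Lemma BL_in p : (p \in BL) = (p.1 \in Dcl) && (p.2 \in LamD p.1).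
Proof. by rewrite inE. Qed.
Lemma BM_in p q : (q \in BM p) = (q.1 \in LIn p.1) && (q.2 \in MD p.1 p.2).
Proof. by rewrite inE. Qed.

Lemma BC_Phi p q1 q2 : BC p q1 q2 = Phi p.1 q1.1 q2.1 (CD p.1 p.2 q1.2 q2.2).
Proof. by apply: eq_bigr => g _; rewrite /wD mulrA. Qed.

Lemma Phi_eval D L K c z : D \in Dcl -> L \in LIn D -> K \in LIn D ->
  Phi D L K c z = if [&& Dclass mul z == D, Lclass mul (star z) == L & Lclass mul z == K]
                  then c (hz z) * wD D L K (hz z) else 0.
Proof.
move=> hD hL hK; rewrite /Phi sum_ffunE.
under eq_bigr => g _ do rewrite fscaleE basisE.
case: ifP => [/and3P[/eqP ED /eqP EL /eqP EK]|H].
- have [h1 h2] := hz_spec mul_assoc hstar A2 hu z; rewrite ED EL EK in h1 h2.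
  rewrite (bigD1 (hz z)) //= -h2 eqxx mulr1 [X in _ + X]big1 ?addr0 // => g /andP[hg ng].
  case: eqP => [Ez|]; last by rewrite mulr0.
  have [_ _ _ Eh] := xg_unique mul_assoc hstar A2 hu hD hL hK hg.
  by rewrite -Ez in Eh; rewrite Eh eqxx in ng.
- apply: big1 => g hg; case: eqP => [Ez|]; last by rewrite mulr0.
  have [E1 E2 E3 _] := xg_unique mul_assoc hstar A2 hu hD hL hK hg.
  by move: H; rewrite Ez E1 E2 E3 !eqxx.
Qed.

Lemma combD_ext D c1 c2 : (forall l s t, c1 l s t = c2 l s t) -> combD D c1 = combD D c2.
Proof.
move=> H; rewrite /combD /comb; apply: eq_bigr => l _; apply: eq_bigr => s _.
by apply: eq_bigr => t _; rewrite H.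
Qed.

Lemma combD_eval D c h : combD D c h =
  \sum_(l in LamD D) \sum_(s in MD D l) \sum_(t in MD D l) c l s t * CD D l s t h.
Proof.
rewrite /combD /comb sum_ffunE; apply: eq_bigr => l _; rewrite sum_ffunE.
apply: eq_bigr => s _; rewrite sum_ffunE; apply: eq_bigr => t _; by rewrite fscaleE.
Qed.

Lemma comb_eval coef z :
  comb BL BM BC coef z =
  wD (Dclass mul z) (Lclass mul (star z)) (Lclass mul z) (hz z) *
  combD (Dclass mul z)
    (fun l s t => coef (Dclass mul z, l) (Lclass mul (star z), s) (Lclass mul z, t)) (hz z).
Proof.
set D := Dclass mul z; set L := Lclass mul (star z); set K := Lclass mul z.
have hD : D \in Dcl := Dclass_in mul z.
have zD : z \in D := Dclass_refl mul_assoc z.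
have hL : L \in LIn D.
  by apply: Lclass_in; rewrite (star_D mul_assoc hstar A2 hD).
have hK : K \in LIn D by apply: Lclass_in.
have E3 : forall p q1 q2, p \in BL -> q1 \in BM p -> q2 \in BM p ->
    fscale (coef p q1 q2) (BC p q1 q2) z =
    if [&& D == p.1, L == q1.1 & K == q2.1]
    then coef p q1 q2 * (CD p.1 p.2 q1.2 q2.2 (hz z) * wD p.1 q1.1 q2.1 (hz z)) else 0.
  move=> p q1 q2; rewrite BL_in !BM_in => /andP[h1 _] /andP[h2 _] /andP[h3 _].
  rewrite fscaleE BC_Phi Phi_eval //.
  by case: ifP; rewrite ?mulr0.
rewrite /comb sum_ffunE.
rewrite (sum_fst (P := fun p => p \in BL) (a := D)) => [|p hp nD]; last first.
  rewrite sum_ffunE; apply: big1 => q1 hq1; rewrite sum_ffunE; apply: big1 => q2 hq2.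
  by rewrite E3 // eq_sym (negbTE nD).
rewrite combD_eval mulr_sumr; apply: eq_big => [l|l hl].
  by rewrite BL_in hD.
rewrite sum_ffunE (sum_fst (P := fun q => q \in BM (D, l)) (a := L)) => [|q1 hq1 nL]; last first.
  rewrite sum_ffunE; apply: big1 => q2 hq2.
  by rewrite E3 //= eqxx eq_sym (negbTE nL).
rewrite mulr_sumr; apply: eq_big => [s|s hs]; first by rewrite BM_in /= hL.
rewrite sum_ffunE (sum_fst (P := fun q => q \in BM (D, l)) (a := K)) => [|q2 hq2 nK]; last first.
  by rewrite E3 //= !eqxx eq_sym (negbTE nK).
rewrite mulr_sumr; apply: eq_big => [t|t ht]; first by rewrite BM_in /= hK.
rewrite E3 //= !eqxx /=.
by rewrite mulrA mulrC.
Qed.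

Lemma w_unit D L K h : D \in Dcl -> L \in LIn D -> K \in LIn D -> h \in G D ->
  exists w', wD D L K h * w' = 1.
Proof.
move=> hD hL hK hh; case: (A3 hD) => U _ _ _.
have a1 := suLD hD hL.
have [r1 E1] := U _ _ a1 (GLs hD hh).
have [r2 E2] := U _ _ (mLG hD a1 hh) (uLs hD hK).
by exists (r1 * r2); rewrite /wD mulrACA E1 E2 mulr1.
Qed.

Lemma cancel_unit (w w' x : R) : w * w' = 1 -> w * x = 0 -> x = 0.
Proof. by move=> h1 h2; rewrite -[x]mul1r -h1 mulrAC h2 mul0r. Qed.

Lemma CD_supp D l s t h : D \in Dcl -> l \in LamD D -> s \in MD D l -> t \in MD D l ->
  h \notin G D -> CD D l s t h = 0.
Proof.
move=> hD hl hs ht hh; have [_ [[inC _ _] _]] := A4 hD.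
exact: inC.
Qed.

Lemma indep coef : comb BL BM BC coef = 0 ->
  forall p q1 q2, p \in BL -> q1 \in BM p -> q2 \in BM p -> coef p q1 q2 = 0.
Proof.
move=> H [D l] [L s] [K t]; rewrite BL_in !BM_in /= => /andP[hD hl] /andP[hL hs] /andP[hK ht].
have Hc : combD D (fun l s t => coef (D, l) (L, s) (K, t)) = 0.
  apply/ffunP => h; rewrite [RHS]ffunE.
  case: (boolP (h \in G D)) => hh.
  - have [E1 E2 E3 E4] := xgU hD hL hK hh.
    have := comb_eval coef (xg L h K); rewrite H ffunE E1 E2 E3 E4 => /esym.
    have [w' Hw] := w_unit hD hL hK hh.
    exact: cancel_unit Hw.
  - rewrite combD_eval; apply: big1 => l' hl'; apply: big1 => s' hs'; apply: big1 => t' ht'.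
    by rewrite CD_supp ?mulr0.
have [_ [[_ indepC _] _]] := A4 hD.
exact: (indepC _ Hc).
Qed.

Lemma span (a : fS) : exists coef, a = comb BL BM BC coef.
Proof.
have Hw : forall D L K h, exists w', [&& D \in Dcl, L \in LIn D, K \in LIn D & h \in G D] ->
    wD D L K h * w' = 1.
  move=> D L K h; case: (boolP [&& _, _, _ & _]) => [/and4P[h1 h2 h3 h4]|_].
    by have [w' Hw'] := w_unit h1 h2 h3 h4; exists w'.
  by exists 0.
pose wi D L K h := proj1_sig (constructive_indefinite_description _ (Hw D L K h)).
have Hwi : forall D L K h, [&& D \in Dcl, L \in LIn D, K \in LIn D & h \in G D] ->
    wD D L K h * wi D L K h = 1.
  by move=> D L K h; rewrite /wi; case: constructive_indefinite_description.
pose b D L K : fS := [ffun h => if h \in G D then a (xg L h K) * wi D L K h else 0].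
have Hc : forall D L K, exists c, D \in Dcl -> b D L K = combD D c.
  move=> D L K; case: (boolP (D \in Dcl)) => hD; last by exists (fun _ _ _ => 0).
  have [_ [[_ _ spanC] _]] := A4 hD.
  have inb : forall x, x \notin G D -> b D L K x = 0.
    by move=> x hx; rewrite ffunE (negbTE hx).
  by have [c Hc] := spanC _ inb; exists c.
pose fc D L K := proj1_sig (constructive_indefinite_description _ (Hc D L K)).
have Hfc : forall D L K, D \in Dcl -> b D L K = combD D (fc D L K).
  by move=> D L K; rewrite /fc; case: constructive_indefinite_description.
exists (fun p q1 q2 => fc p.1 q1.1 q2.1 p.2 q1.2 q2.2).
apply/ffunP => z; rewrite comb_eval /=.
set D := Dclass mul z; set L := Lclass mul (star z); set K := Lclass mul z.
have hD : D \in Dcl := Dclass_in mul z.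
have hL : L \in LIn D.
  by apply: Lclass_in; rewrite (starD hD) Dclass_refl.
have hK : K \in LIn D by apply: Lclass_in; rewrite Dclass_refl.
have [h1 h2] := hzS z.
rewrite -/D -/L -/K in h1 h2.
rewrite -Hfc // ffunE h1 -h2 mulrCA Hwi ?mulr1 //.
by rewrite hD hL hK h1.
Qed.

Lemma comb_mask coef D0 z :
  comb BL BM BC (fun p q1 q2 => if p.1 == D0 then coef p q1 q2 else 0) z =
  if Dclass mul z == D0 then comb BL BM BC coef z else 0.
Proof.
rewrite !comb_eval; case: ifP => E.
- by [].
- rewrite combD_eval big1 ?mulr0 // => l _; apply: big1 => s _; apply: big1 => t _.
  by rewrite mul0r.
Qed.

Local Notation inlow p a := (in_lower BL BLe BM BC p a).

Lemma inlow0 p : inlow p 0.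
Proof.
exists (fun _ _ _ => 0); apply/esym/big1 => mu _; apply: big1 => q1 _; apply: big1 => q2 _.
exact: fscale0.
Qed.

Lemma inlowD p a b : inlow p a -> inlow p b -> inlow p (a + b).
Proof.
move=> [d1 ->] [d2 ->]; exists (fun m q1 q2 => d1 m q1 q2 + d2 m q1 q2).
rewrite -big_split; apply: eq_bigr => mu _; rewrite -big_split; apply: eq_bigr => q1 _.
by rewrite -big_split; apply: eq_bigr => q2 _; rewrite fscaleDl.
Qed.

Lemma inlowZ p r a : inlow p a -> inlow p (fscale r a).
Proof.
move=> [d ->]; exists (fun m q1 q2 => r * d m q1 q2).
rewrite fscale_sumr; apply: eq_bigr => mu _; rewrite fscale_sumr; apply: eq_bigr => q1 _.
by rewrite fscale_sumr; apply: eq_bigr => q2 _; rewrite fscaleA.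
Qed.

Lemma inlow_sum p (I : finType) (P : pred I) (F : I -> fS) :
  (forall i, P i -> inlow p (F i)) -> inlow p (\sum_(i | P i) F i).
Proof.
move=> H; apply: (big_ind (fun a => inlow p a)) => //; [exact: inlow0 | exact: inlowD].
Qed.

Lemma inlow_BC p mu q1 q2 : mu \in BL -> BLe mu p -> mu != p -> q1 \in BM mu -> q2 \in BM mu ->
  inlow p (BC mu q1 q2).
Proof.
move=> hmu hle hne h1 h2.
exists (fun m r1 r2 => ((m == mu) && (r1 == q1) && (r2 == q2))%:R).
rewrite (bigD1 mu) /=; last by rewrite hmu hle hne.
rewrite [X in _ + X]big1 => [|m /andP[_ nm]]; last first.
  apply: big1 => r1 _; apply: big1 => r2 _; by rewrite (negbTE nm) fscale0.
rewrite addr0 (bigD1 q1) //= [X in _ + X]big1 => [|r1 /andP[_ nr1]]; last first.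
  apply: big1 => r2 _; by rewrite eqxx (negbTE nr1) fscale0.
rewrite addr0 (bigD1 q2) //= [X in _ + X]big1 => [|r2 /andP[_ nr2]]; last first.
  by rewrite !eqxx (negbTE nr2) fscale0.
by rewrite addr0 !eqxx fscale1.
Qed.

Lemma low_basis D l z : D \in Dcl -> ltDcl mul (Dclass mul z) D -> inlow (D, l) (basis z).
Proof.
move=> hD hlt.
have [coef Hc] := span (basis z).
set Dz := Dclass mul z.
have -> : basis z = comb BL BM BC (fun p q1 q2 => if p.1 == Dz then coef p q1 q2 else 0).
  apply/ffunP => y; rewrite comb_mask -Hc.
  case: ifP => // E; rewrite basisE; case: eqP => // Ey.
  by move: E; rewrite Ey eqxx.
apply: inlow_sum => mu hmu; case: eqP => Emu.
- apply: inlow_sum => q1 hq1; apply: inlow_sum => q2 hq2; apply: inlowZ.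
  apply: inlow_BC => //.
    by rewrite /bigLe /= Emu hlt.
  apply/eqP => E; move: hlt; rewrite -/Dz -Emu E /ltDcl /= eqxx andbF.
  by [].
- rewrite big1; first exact: inlow0.
  by move=> q1 _; apply: big1 => q2 _; rewrite fscale0.
Qed.

Lemma Phi_add D L K a b : Phi D L K (a + b) = Phi D L K a + Phi D L K b.
Proof. by rewrite /Phi -big_split; apply: eq_bigr => g _; rewrite ffunE mulrDl fscaleDl. Qed.
Lemma Phi_opp D L K a : Phi D L K (- a) = - Phi D L K a.
Proof. by rewrite /Phi -sumrN; apply: eq_bigr => g _; rewrite ffunE mulNr fscaleNl. Qed.
Lemma Phi_scale D L K r a : Phi D L K (fscale r a) = fscale r (Phi D L K a).
Proof. by rewrite /Phi fscale_sumr; apply: eq_bigr => g _; rewrite ffunE fscaleA mulrA. Qed.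
Lemma Phi0 D L K : Phi D L K 0 = 0.
Proof. by rewrite /Phi big1 // => g _; rewrite ffunE mul0r fscale0. Qed.
Lemma Phi_sum D L K (I : finType) (P : pred I) (F : I -> fS) :
  Phi D L K (\sum_(i | P i) F i) = \sum_(i | P i) Phi D L K (F i).
Proof. exact: (big_morph (Phi D L K) (Phi_add D L K) (Phi0 D L K)). Qed.
Lemma Phi_basis D L K k : k \in G D ->
  Phi D L K (basis k) = fscale (wD D L K k) (basis (xg L k K)).
Proof.
move=> hk; rewrite /Phi (bigD1 k) //= [X in _ + X]big1 => [|g /andP[_ ng]]; last first.
  by rewrite basisE (negbTE ng) mulr0n mul0r fscale0.
by rewrite addr0 basisE eqxx mulr1n mul1r.
Qed.


Lemma C3x p q1 x : p \in BL -> q1 \in BM p -> exists r : {set S} * Mt -> R,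
  forall q2, q2 \in BM p ->
  inlow p (tmul mul alpha (basis x) (BC p q1 q2) -
           \sum_(q' in BM p) fscale (r q') (BC p q' q2)).
Proof.
case: p q1 => D l [L s]; rewrite BL_in BM_in /= => /andP[hD hl] /andP[hL hs].
have a0L : star (u L) \in LD mul one D := suLD hD hL.
case: (boolP (x ⋅ star (u L) \in LD mul one D)) => hx; last first.
  exists (fun _ => 0) => -[K t]; rewrite BM_in /= => /andP[hK ht].
  rewrite big1 ?subr0 => [|q' _]; last exact: fscale0.
  rewrite BC_Phi /= /Phi tmul_basis_sum.
  apply: inlow_sum => g hg; apply: inlowZ; apply: low_basis => //.
  apply: (lwD hD (LDin hD a0L)).
    apply/leJP; exists (Some x), (Some (g ⋅ u K)) => /=.
    by rewrite /xg !mul_assoc.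
  apply/negP => hin; apply: (negP hx); apply: (cA hD a0L (k := g ⋅ u K)).
  by move: hin; rewrite /xg !mul_assoc.
have [h hh Eh] := LDdec hD hx.
set L' := Lclass mul (star (x ⋅ star (u L))) in Eh.
have hL' : L' \in LIn D.
  by apply: Lclass_in; rewrite (starD hD) (LDin hD hx).
have vL : star (u L') \in LD mul one D := suLD hD hL'.
have [U Co AB Sy] := A3 hD.
have [bi Hbi] := U _ _ vL (GLs hD hh).
have [_ [_ [_ C3D]]] := A4 hD.
have inbh : forall y, y \notin G D -> basis h y = 0.
  move=> y hy; rewrite basisE; case: eqP => // E.
  by move: hy; rewrite E hh.
have [rD HrD] := C3D l s (basis h) hl hs inbh.
pose kap := alpha x (star (u L)) * bi.
exists (fun q' => if q'.1 == L' then kap * rD q'.2 else 0).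
move=> [K t]; rewrite BM_in /= => /andP[hK ht].
have [d Hd] := HrD t ht.
set c := CD D l s t.
have cG : forall y, y \notin G D -> c y = 0 by move=> y; apply: CD_supp.
have Hlhs : tmul mul alpha (basis x) (BC (D, l) (L, s) (K, t)) =
            fscale kap (Phi D L' K (tmul mul (beta D) (basis h) c)).
  rewrite BC_Phi /= [in LHS]/Phi -/c tmul_basis_sum.
  rewrite [in RHS](supp_decomp cG) tmul_basis_sum Phi_sum fscale_sumr.
  apply: eq_bigr => g hg.
  rewrite Phi_scale Phi_basis ?mGG // !fscaleA.
  have Ex : x ⋅ xg L g K = xg L' (h ⋅ g) K by rewrite /xg !mul_assoc -Eh.
  rewrite Ex; congr (fscale _ _).
  have gL := GL hD hg; have gLs := GLs hD hg; have hL_ := GL hD hh; have hLs := GLs hD hh.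
  have uKs := uLs hD hK.
  have a0gL := mLG hD a0L hg.
  have xa0gL : x ⋅ (star (u L) ⋅ g) \in LD mul one D by rewrite mul_assoc; exact: mLG.
  have e1 := AB _ _ _ xa0gL uKs a0gL.
  have e2 := AB _ _ _ hx gLs a0L.
  have vhL : star (u L') ⋅ h \in LD mul one D by rewrite -Eh.
  have e3 := Co _ _ _ vL hLs vhL gLs (GLs hD (mGG hD hh hg)) hL_.
  rewrite /wD /kap.
  have E4 : star (u L') ⋅ (h ⋅ g) = x ⋅ (star (u L) ⋅ g) by rewrite mul_assoc -Eh mul_assoc.
  have E5 : star (u L') ⋅ h = x ⋅ star (u L) by rewrite Eh.
  rewrite E4; rewrite E5 in e3.
  rewrite /xg in e1 *.
  set A := alpha x (star (u L)) in e2 *.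
  set B1 := beta D (star (u L)) g in e2 *.
  set B2 := beta D (star (u L) ⋅ g) (u K) in e1 *.
  set Al := alpha x (star (u L) ⋅ g ⋅ u K) in e1 *.
  set Al2 := alpha x (star (u L) ⋅ g) in e1 e2 *.
  set B3 := beta D (x ⋅ (star (u L) ⋅ g)) (u K) in e1 *.
  set B4 := beta D (x ⋅ star (u L)) g in e2 e3 *.
  set Bh := beta D h g in e3 *.
  set Bv := beta D (star (u L')) (h ⋅ g) in e3 *.
  set Bvh := beta D (star (u L')) h in Hbi e3 *.
  set cg := c g.
  transitivity (cg * B1 * (Al * B2)); first by ring.
  rewrite -e1.
  transitivity (cg * B3 * (Al2 * B1)); first by ring.
  rewrite -e2.
  transitivity (A * (cg * B3) * B4 * (Bvh * bi)); first by rewrite Hbi; ring.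
  transitivity (A * (cg * B3) * bi * (Bvh * B4)); first by ring.
  by rewrite e3; ring.
have Hsum : \sum_(q' in BM (D, l)) fscale (if q'.1 == L' then kap * rD q'.2 else 0)
               (BC (D, l) q' (K, t)) =
            fscale kap (Phi D L' K (\sum_(s' in MD D l) fscale (rD s') (CD D l s' t))).
  rewrite (sum_fst (P := fun q => q \in BM (D, l)) (a := L')) => [|q hq nq]; last first.
    by rewrite (negbTE nq) fscale0.
  rewrite Phi_sum fscale_sumr; apply: eq_big => [s'|s' hs']; first by rewrite BM_in /= hL'.
  by rewrite eqxx /= BC_Phi /= Phi_scale fscaleA.
rewrite Hlhs Hsum -fscaleN -fscaleD -Phi_opp -Phi_add.
rewrite -/c in Hd; rewrite Hd.
apply: inlowZ; rewrite Phi_sum; apply: inlow_sum => mu /andP[hmu hlt].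
rewrite Phi_sum; apply: inlow_sum => s2 hs2; rewrite Phi_sum; apply: inlow_sum => t2 ht2.
rewrite Phi_scale; apply: inlowZ.
have -> : Phi D L' K (CD D mu s2 t2) = BC (D, mu) (L', s2) (K, t2) by rewrite BC_Phi.
case/andP: hlt => h1 h2.
apply: inlow_BC.
- by rewrite BL_in /= hD hmu.
- by rewrite /bigLe /= eqxx h1 orbT.
- by rewrite xpair_eqE eqxx.
- by rewrite BM_in /= hL' hs2.
- by rewrite BM_in /= hK ht2.
Qed.

Lemma C3 p q1 (a : fS) : p \in BL -> q1 \in BM p -> exists r : {set S} * Mt -> R,
  forall q2, q2 \in BM p ->
  inlow p (tmul mul alpha a (BC p q1 q2) - \sum_(q' in BM p) fscale (r q') (BC p q' q2)).
Proof.
move=> hp hq1.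
have Hx := fun x => C3x x hp hq1.
pose fr x := proj1_sig (constructive_indefinite_description _ (Hx x)).
have Hfr : forall x q2, q2 \in BM p -> inlow p (tmul mul alpha (basis x) (BC p q1 q2) -
           \sum_(q' in BM p) fscale (fr x q') (BC p q' q2)).
  by move=> x; rewrite /fr; case: constructive_indefinite_description.
exists (fun q' => \sum_x a x * fr x q') => q2 hq2.
have -> : tmul mul alpha a (BC p q1 q2) -
          \sum_(q' in BM p) fscale (\sum_x a x * fr x q') (BC p q' q2) =
          \sum_x fscale (a x) (tmul mul alpha (basis x) (BC p q1 q2) -
                                \sum_(q' in BM p) fscale (fr x q') (BC p q' q2)).
  have -> : tmul mul alpha a (BC p q1 q2) =
            \sum_x fscale (a x) (tmul mul alpha (basis x) (BC p q1 q2)).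
    apply/ffunP => z; rewrite sum_ffunE tmul_decomp.
    by apply: eq_bigr => x _; rewrite fscaleE.
  under [in RHS]eq_bigr => x _ do rewrite fscaleD fscaleN fscale_sumr.
  rewrite sumrB; congr (_ - _).
  rewrite [RHS]exchange_big /=; apply: eq_bigr => q' _.
  apply/ffunP => z; rewrite fscaleE [in RHS]sum_ffunE mulr_suml.
  by apply: eq_bigr => x _; rewrite !fscaleE mulrA.
by apply: inlow_sum => x _; apply: inlowZ; apply: Hfr.
Qed.

Lemma fstar_inv (a : fS) : fstar star (fstar star a) = a.
Proof. by apply/ffunP => z; rewrite !ffunE (sinv hstar). Qed.

Lemma fstar_lin r (a b : fS) : fstar star (fscale r a + b) = fscale r (fstar star a) + fstar star b.
Proof. by apply/ffunP => z; rewrite !ffunE. Qed.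

Lemma fstar_mul (a b : fS) :
  fstar star (tmul mul alpha a b) = tmul mul alpha (fstar star b) (fstar star a).
Proof.
have sinj := star_inj hstar.
apply/ffunP => z; rewrite !ffunE.
under eq_bigr => x _ do rewrite big_mkcond.
under [in RHS]eq_bigr => x _ do rewrite big_mkcond.
rewrite exchange_big [in RHS](reindex_inj sinj) /=; apply: eq_bigr => y _.
rewrite (reindex_inj sinj) /=; apply: eq_bigr => x _.
rewrite !ffunE !(sinv hstar).
have -> : (star y ⋅ x == z) = (star x ⋅ y == star z).
  by rewrite -(inj_eq sinj) (smul hstar) (sinv hstar).
rewrite [alpha (star x) y]A1 (sinv hstar).
by case: ifP => // _; rewrite [a _ * b _]mulrC.
Qed.

Lemma fstar_Phi D L K c : fstar star (Phi D L K c) =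
  \sum_(g in G D) fscale (c g * wD D L K g) (basis (star (xg L g K))).
Proof.
apply/ffunP => z; rewrite ffunE !sum_ffunE; apply: eq_bigr => g _.
rewrite !fscaleE !basisE; congr (_ * _%:R).
by rewrite -(inj_eq (star_inj hstar)) (sinv hstar).
Qed.

Lemma w_sym D L K g : D \in Dcl -> L \in LIn D -> K \in LIn D -> g \in G D ->
  wD D L K (star g) = wD D K L g.
Proof.
move=> hD hL hK hg; have [U Co AB Sy] := A3 hD.
have gs : star g \in G D by rewrite starG.
have aL := suLD hD hL; have aK := suLD hD hK.
have uLs_ := uLs hD hL; have uKs := uLs hD hK.
rewrite /wD.
have h3 : star (star g) \in LD mul one D by rewrite (sinv hstar) GL.
have h4 : star (star (u L)) \in LDs mul star one D by rewrite (sinv hstar).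
have e1 : beta D (star (u L)) (star g) = beta D g (u L).
  by rewrite (Sy _ _ aL (GLs hD gs) h3 h4) !(sinv hstar).
have h5 : star (star (u L) ⋅ star g) \in LDs mul star one D.
  by rewrite (smul hstar) !(sinv hstar); exact (mGLs hD hg uLs_).
have e2 : beta D (star (u L) ⋅ star g) (u K) = beta D (star (u K)) (g ⋅ u L).
  by rewrite (Sy _ _ (mLG hD aL gs) uKs aK h5) (smul hstar) !(sinv hstar).
have e3 := Co _ _ _ aK (GLs hD hg) (mLG hD aK hg) uLs_ (mGLs hD hg uLs_) (GL hD hg).
by rewrite e1 e2 e3 mulrC.
Qed.

Lemma star_BC p q1 q2 : p \in BL -> q1 \in BM p -> q2 \in BM p ->
  fstar star (BC p q1 q2) = BC p q2 q1.
Proof.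
case: p q1 q2 => D l [L s] [K t]; rewrite BL_in !BM_in /= => /andP[hD hl] /andP[hL hs] /andP[hK ht].
rewrite !BC_Phi /= fstar_Phi /Phi.
rewrite (reindex_inj (star_inj hstar)) /=.
apply: eq_big => [g|g hg]; first by rewrite starG.
have [_ [_ [[_ _ _ _ stC] _]]] := A4 hD.
have := congr1 (fun f : fS => f g) (stC l s t hl hs ht); rewrite ffunE => <-.
rewrite starxg (sinv hstar) w_sym //.
by rewrite -starG.
Qed.

Lemma BLe_refl : {in BL, forall p, BLe p p}.
Proof.
move=> [D l]; rewrite BL_in /= => /andP[hD hl].
have [[rf _ _] _] := A4 hD.
by rewrite /bigLe /= eqxx rf ?orbT.
Qed.

Lemma ltDcl_irr D : ltDcl mul D D = false.
Proof. by rewrite /ltDcl eqxx andbF. Qed.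

Lemma BLe_anti : {in BL &, forall p q, BLe p q -> BLe q p -> p = q}.
Proof.
move=> [D1 l1] [D2 l2]; rewrite !BL_in /= => /andP[h1 hl1] /andP[h2 hl2].
rewrite /bigLe /= => /orP[lt1|/andP[/eqP E1 le1]] /orP[lt2|/andP[/eqP E2 le2]].
- case/andP: lt1 => a1 n1; case/andP: lt2 => a2 _.
  by move: n1; rewrite (leDcl_antisym mul_assoc h1 h2 a1 a2) eqxx.
- by move: lt1; rewrite E2 ltDcl_irr.
- by move: lt2; rewrite E1 ltDcl_irr.
- subst D2; have [[_ an _] _] := A4 h1.
  by rewrite (an l1 l2).
Qed.

Lemma BLe_trans : {in BL & &, forall p q r, BLe p q -> BLe q r -> BLe p r}.
Proof.
move=> [D1 l1] [D2 l2] [D3 l3]; rewrite !BL_in /= => /andP[h1 hl1] /andP[h2 hl2] /andP[h3 hl3].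
rewrite /bigLe /= => /orP[lt1|/andP[/eqP E1 le1]] /orP[lt2|/andP[/eqP E2 le2]].
- by rewrite (ltDcl_trans mul_assoc h1 h2 lt1 lt2).
- by rewrite -E2 lt1.
- by rewrite E1 lt2.
- subst D2 D3; have [[_ _ tr] _] := A4 h1.
  by rewrite eqxx (tr l1 l2 l3) ?orbT.
Qed.

Lemma mainthm : cellular (fun _ : fS => True) (tmul mul alpha) (fstar star) BL BLe BM BC.
Proof.
split; first by split; [exact: BLe_refl | exact: BLe_anti | exact: BLe_trans].
split; first split.
- by [].
- exact: indep.
- by move=> a _; exact: span.
split; first split.
- by [].
- by move=> a _; exact: fstar_inv.
- by move=> r a b _ _; exact: fstar_lin.
- by move=> a b _ _; exact: fstar_mul.
- by move=> l s t hl hs ht; exact: star_BC.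
by move=> l s a hl hs _; exact: C3.
Qed.
End Alg.

Unset Implicit Arguments.

Theorem theorem5
  (S : finType) (mul : S -> S -> S) (mul_assoc : associative mul)
  (star : S -> S) (hstar : anti_involution mul star)
  (R : comPzRingType) (alpha : S -> S -> R) (halpha : twisting mul alpha)
  (A1 : forall x y, alpha x y = alpha (star y) (star x))
  (one : {set S} -> S)
  (A2 : forall D, D \in Dclasses mul ->
          [/\ one D \in D, mul (one D) (one D) = one D & star (one D) = one D])
  (beta : {set S} -> S -> S -> R)
  (A3 : forall D, D \in Dclasses mul ->
     let L := LD mul one D in let Ls := LDs mul star one D in
     [/\ (forall x y, x \in L -> y \in Ls -> is_unit (beta D x y)),
         (forall x y z, x \in L -> y \in Ls -> mul x y \in L -> z \in Ls ->
             mul y z \in Ls -> y \in L ->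
             beta D x y * beta D (mul x y) z = beta D x (mul y z) * beta D y z),
         (forall x y z, mul x y \in L -> z \in Ls -> y \in L ->
             alpha x y * beta D (mul x y) z = alpha x (mul y z) * beta D y z)
       & (forall x y, x \in L -> y \in Ls -> star y \in L -> star x \in Ls ->
             beta D x y = beta D (star y) (star x))])
  (Lam : finType) (LamD : {set S} -> {set Lam}) (leD : {set S} -> rel Lam)
  (Mt : finType) (MD : {set S} -> Lam -> {set Mt})
  (CD : {set S} -> Lam -> Mt -> Mt -> {ffun S -> R})
  (A4 : forall D, D \in Dclasses mul ->
     cellular (fun a : {ffun S -> R} =>
                 forall x, x \notin GD mul star one D -> a x = 0)
              (tmul mul (beta D)) (fstar star)
              (LamD D) (leD D) (MD D) (CD D))
  (u : {set S} -> S)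
  (hu : forall D, D \in Dclasses mul -> forall L, L \in LclassesIn mul D ->
          u L \in L /\ Rrel mul (u L) (one D)) :
  cellular (fun _ : {ffun S -> R} => True) (tmul mul alpha) (fstar star)
    (bigLam mul LamD) (bigLe mul leD) (bigM mul MD)
    (bigC mul star one beta CD u).
Proof.
by apply: mainthm; assumption.
Qed.
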